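(* Fix an integer $k\ge1$, let $\Delta_k:=\log(1/2)/\log(1-2^{-k})$ and fix $\Delta>\Delta_k$. For $n\ge k$ let $m=\lceil\Delta n^k\rceil$ and consider the test $\psi_{\mathcal{L}}(V)=\mathbf{1}\{(\mathcal{L}_V)\text{ has a solution in }\mathbb{F}_2^{N_k}\}$. Under $H_0$ the data $(\ell_j,\varepsilon_j)_{j\in[m]}$ are i.i.d. with $\ell_j$ a uniformly random $k$-tuple of linearly independent linear forms and $\varepsilon_j\in\mathbb{F}_2^k$ uniform and independent of $\ell_j$; under $H_1$ the flats $V_j=\{x:\ell_{j,i}(x)=\varepsilon_{j,i}\ \forall i\}$ have joint law $\mathbf{P}_{\text{planted}}$, each given by any pair $(\ell_j,\varepsilon_j)$ describing it. Then as $n\to\infty$, $$\mathbf{P}_{\text{unif}}(\psi_{\mathcal{L}}=1)\vee\mathbf{P}_{\text{planted}}(\psi_{\mathcal{L}}=0)\to0.$$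
   Context: A $k$-flat of $\mathbb{F}_2^n$ is an affine subspace of dimension $n-k$, described as $\{x:\ell_i(x)=\varepsilon_i\ \forall i\in[k]\}$ with $\ell_1,\dots,\ell_k$ linearly independent linear forms and $\varepsilon\in\mathbb{F}_2^k$. $q_0$ is the uniform distribution on $k$-flats, $q_x$ the uniform distribution on $k$-flats not containing $x$; $\mathbf{P}_{\text{unif}}=q_0^{\otimes m}$, $\mathbf{P}_{\text{planted}}=2^{-n}\sum_{x\in\mathbb{F}_2^n}q_x^{\otimes m}$. Let $N_k=\sum_{i=0}^k\binom{n}{i}$ and index coordinates of $\mathbb{F}_2^{N_k}$ by $S\subseteq[n]$, $|S|\le k$. For linear forms $\ell=(\ell_1,\dots,\ell_k)$ and $\alpha\in\mathbb{F}_2^k$, expand $\prod_{i=1}^k(\ell_i(x)+\alpha_i)$ in $\mathbb{F}_2[x_1,\dots,x_n]$ and reduce with $x_s^2=x_s$ to $\sum_{|S|\le k}c_S(\ell,\alpha)\prod_{s\in S}x_s$; set $\mathcal{L}_{\ell,\alpha}(Y)=\sum_{|S|\le k}c_S(\ell,\alpha)Y_S$. With $\alpha_j=(1-\varepsilon_{j,i})_i$, the system $(\mathcal{L}_V)$ is: $\mathcal{L}_{\ell_j,\alpha_j}(Y)=0$ for all $j\in[m]$, and $Y_\emptyset=1$. $a\vee b=\max(a,b)$. *)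

(* Defs.v *)
From Stdlib Require Import Reals.
From HB Require Import structures.
From mathcomp Require Import all_boot all_order all_algebra all_field.
Set Implicit Arguments. Unset Strict Implicit. Unset Printing Implicit Defensive.

(* A k-tuple of linear forms on F_2^n is a k x n matrix over 'F_2 (row i is
   ell_i, with ell_i(x) = sum_s l i s * x s); linear independence = row_free. *)
Definition datum (n k : nat) := ('M['F_2]_(k, n) * 'rV['F_2]_k)%type.

Definition in_flat n k (d : datum n k) (x : 'rV['F_2]_n) : bool :=
  (x *m d.1^T == d.2)%R.

Definition alpha k (e : 'rV['F_2]_k) : 'rV['F_2]_k := \row_i (1 - e ord0 i)%R.

(* Coordinates of F_2^{N_k}: subsets S of [n] with |S| <= k. *)
Definition Idx (n k : nat) := {S : {set 'I_n} | #|S| <= k}.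

(* c_S(ell, a): coefficient of the multilinear monomial prod_{s in S} x_s in
   the expansion of prod_i (sum_s l i s * x_s + a_i), reduced with x_s^2 = x_s.
   Expanding the product = choosing, for each factor i, either the constant a_i
   (None) or the term l i s * x_s (Some s); after reduction the monomial is
   indexed by the set of chosen variables. *)
Definition coefS n k (l : 'M['F_2]_(k, n)) (a : 'rV['F_2]_k) (S : {set 'I_n})
  : 'F_2 :=
  (\sum_(f : {ffun 'I_k -> option 'I_n} | [set s | Some s \in codom f] == S)
     \prod_(i < k) match f i with None => a ord0 i | Some s => l i s end)%R.

Definition Lform n k (l : 'M['F_2]_(k, n)) (a : 'rV['F_2]_k)
  (Y : {ffun Idx n k -> 'F_2}) : 'F_2 :=
  (\sum_(S : Idx n k) coefS l a (val S) * Y S)%R.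

Definition psiL n k m (d : {ffun 'I_m -> datum n k}) : bool :=
  [exists Y : {ffun Idx n k -> 'F_2},
     [forall S : Idx n k, (val S == set0) ==> (Y S == 1%R)] &&
     [forall j : 'I_m, Lform (d j).1 (alpha (d j).2) Y == 0%R]].

(* Support of P_unif (uniform on it): m i.i.d. uniform pairs (ell_j, eps_j),
   ell_j linearly independent, eps_j uniform and independent. *)
Definition Omega0 n k m : {set {ffun 'I_m -> datum n k}} :=
  [set d : {ffun 'I_m -> datum n k} | [forall j, row_free (d j).1]].

(* Support of q_x^{(x) m} in terms of representing pairs: uniform over pairs
   whose flat does not contain x (each flat has the same number of
   representations, so this is q_x on flats). *)
Definition OmegaX n k m (x : 'rV['F_2]_n) : {set {ffun 'I_m -> datum n k}} :=
  [set d : {ffun 'I_m -> datum n k} | [forall j, row_free (d j).1 && ~~ in_flat (d j) x]].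

Arguments OmegaX : clear implicits.

Definition P_unif_accept n k m : R :=
  Rdiv (INR #|[set d in Omega0 n k m | psiL d]|) (INR #|Omega0 n k m|).

Definition P_planted_reject n k m : R :=
  Rmult (Rinv (pow (IZR (Zpos 2)) n)) (\big[Rplus/R0]_(x : 'rV['F_2]_n)
      Rdiv (INR #|[set d in OmegaX n k m x | ~~ psiL d]|) (INR #|OmegaX n k m x|)).

Definition Delta_k (k : nat) : R := Rdiv (ln (Rinv (IZR (Zpos 2)))) (ln (Rminus R1 (Rinv (pow (IZR (Zpos 2)) k)))).

Definition ceilR (x : R) : Z := Z.opp (Int_part (Ropp x)).

Definition m_of (Delta : R) (k n : nat) : nat :=
  Z.to_nat (ceilR (Rmult Delta (INR (n ^ k)%N))).

(* Main.v *)
Require Import Defs.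
From Stdlib Require Import Reals Lra Lia ZArith.
From HB Require Import structures.
From mathcomp Require Import all_boot all_order all_algebra all_field.
From mathcomp Require Import zify.
Set Implicit Arguments. Unset Strict Implicit. Unset Printing Implicit Defensive.

Module MA.
Import GRing.Theory.
Local Open Scope ring_scope.

Lemma F2cases (a : 'F_2) : a = 0 \/ a = 1.
Proof. case: a => [[|[|a]] Ha] /=. left; exact: val_inj. right; exact: val_inj. done. Qed.

Lemma F2_sum (F : 'F_2 -> 'F_2) : \sum_b F b = F 0 + F 1.
Proof. rewrite (@big_ord_recl _ _ _ 1 F) (@big_ord_recl _ _ _ 0) big_ord0 addr0.
 congr (F _ + F _); exact: val_inj. Qed.

Lemma F2_11 : (1 + 1 : 'F_2) = 0. Proof. exact: val_inj. Qed.

Lemma F2_addxx (a : 'F_2) : a + a = 0.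
Proof. by case: (F2cases a) => ->; rewrite ?addr0 ?F2_11. Qed.

Lemma F2_eq (a b : 'F_2) : (a == 0) = (b == 0) -> a = b.
Proof.
case: (F2cases a) => ->; case: (F2cases b) => -> //; rewrite eqxx oner_eq0 //.
Qed.

Section Alg.
Variables n k : nat.

Definition setc (f : {ffun 'I_k -> option 'I_n}) : {set 'I_n} :=
  [set s | Some s \in codom f].

Lemma card_setc f : (#|setc f| <= k)%N.
Proof.
have -> : #|setc f| = #|Some @: setc f| by rewrite card_imset //; move=> ? ? [].
apply: leq_trans (_ : #|f @: 'I_k| <= k)%N.
  apply: subset_leq_card; apply/subsetP => o /imsetP [s]; rewrite inE => /codomP [i ->] ->.
  by apply: imset_f.
by rewrite -[X in (_ <= X)%N]card_ord leq_imset_card.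
Qed.

Definition Sf f : Idx n k := exist _ (setc f) (card_setc f).

Lemma alphaK : involutive (@alpha k).
Proof. move=> e; apply/rowP => i; rewrite !mxE.
by case: (F2cases (e ord0 i)) => ->; apply: val_inj. Qed.

Lemma sum_term (l : 'M['F_2]_(k, n)) (f : {ffun 'I_k -> option 'I_n}) :
  \sum_(a : 'rV['F_2]_k) \prod_(i < k) (match f i with None => a ord0 i | Some s => l i s end)
  = (f == [ffun _ => None])%:R.
Proof.
rewrite (reindex (fun g : {ffun 'I_k -> 'F_2} => \row_i g i)); last first.
  exists (fun a : 'rV['F_2]_k => [ffun i => a ord0 i]) => g _.
    by apply/ffunP => i; rewrite ffunE mxE.
  by apply/rowP => i; rewrite mxE ffunE.
under eq_bigr do under eq_bigr do rewrite mxE.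
rewrite -(bigA_distr_bigA (fun i (b : 'F_2) => match f i with None => b | Some s => l i s end)).
have [->|] := eqVneq f [ffun _ => None].
  by rewrite big1 // => i _; rewrite ffunE F2_sum add0r.
move=> Hf; have [i Hi] : exists i, f i != None.
  apply/existsP; apply: contraR Hf => /existsPn H; apply/eqP/ffunP => i.
  by rewrite ffunE; apply/eqP; move/negPn: (H i).
rewrite (bigD1 i) //= F2_sum; case: (f i) Hi => // s _.
by rewrite F2_addxx mul0r.
Qed.

Lemma setc0 : setc [ffun _ => None] = set0.
Proof. apply/setP => s; rewrite !inE; apply/negbTE/negP => /codomP [i]; rewrite ffunE. by []. Qed.

Lemma sum_coef (l : 'M['F_2]_(k, n)) (S : {set 'I_n}) :
  \sum_(a : 'rV['F_2]_k) coefS l a S = (S == set0)%:R.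
Proof.
rewrite /coefS exchange_big /=.
under eq_bigr do rewrite sum_term.
rewrite big_mkcond (bigD1 [ffun _ => None]) //= big1 => [|f /negbTE ->]; last by case: ifP.
by move: (setc0); rewrite /setc => ->; rewrite eqxx addr0 eq_sym; case: (S == set0).
Qed.

Lemma sum_L (l : 'M['F_2]_(k, n)) (Y : {ffun Idx n k -> 'F_2}) :
  (forall S : Idx n k, val S == set0 -> Y S = 1) ->
  \sum_(a : 'rV['F_2]_k) Lform l a Y = 1.
Proof.
move=> HY; rewrite /Lform exchange_big /=.
under eq_bigr do rewrite -mulr_suml sum_coef.
have H0 : (#|@set0 'I_n| <= k)%N by rewrite cards0.
pose S0 : Idx n k := exist _ set0 H0.
rewrite (bigD1 S0) //= big1 => [|S HS]; first by rewrite eqxx mul1r addr0 HY.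
case: eqP => [E|]; last by rewrite mul0r.
by case/eqP: HS; apply: val_inj; exact: E.
Qed.

Lemma exists_nz (l : 'M['F_2]_(k, n)) (Y : {ffun Idx n k -> 'F_2}) :
  (forall S : Idx n k, val S == set0 -> Y S = 1) ->
  exists e, Lform l (alpha e) Y != 0.
Proof.
move=> HY; case: (boolP [exists e, Lform l (alpha e) Y != 0]) => [/existsP //|/existsPn H]; exfalso.
have := sum_L l HY; rewrite big1 => [|a _]; first by move/eqP; rewrite eq_sym oner_eq0.
by rewrite -(alphaK a); apply/eqP; move/negPn: (H (alpha a)).
Qed.

End Alg.

End MA.
Import MA.

Module MB.
Import GRing.Theory.
Local Open Scope ring_scope.
Section Alg2.
Variables n k : nat.

Lemma sum_option (H : option 'I_n -> 'F_2) : \sum_o H o = H None + \sum_s H (Some s).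
Proof.
rewrite (bigD1 None) //=; congr (_ + _).
rewrite (reindex_omap Some (fun o => o)) /=; last by case.
by apply: eq_bigl => s; rewrite eqxx.
Qed.

Lemma mono_eq (x : 'rV['F_2]_n) (f : {ffun 'I_k -> option 'I_n}) :
  \prod_(s in setc f) x ord0 s =
  \prod_(i < k) (match f i with None => 1 | Some s => x ord0 s end).
Proof.
apply: F2_eq; apply/idP/idP => /prodf_eq0 [].
  move=> s; rewrite inE => /codomP [i Hi] Hs; apply/prodf_eq0; exists i => //; by rewrite -Hi.
move=> i _; case E: (f i) => [s|] /=; last by rewrite oner_eq0.
by move=> Hs; apply/prodf_eq0; exists s => //; rewrite inE; apply/codomP; exists i.
Qed.

Lemma Lform_eval (l : 'M['F_2]_(k, n)) (a : 'rV['F_2]_k) (x : 'rV['F_2]_n) :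
  Lform l a [ffun S : Idx n k => \prod_(s in val S) x ord0 s] =
  \prod_(i < k) (a ord0 i + \sum_s l i s * x ord0 s).
Proof.
rewrite /Lform /coefS.
under eq_bigr do rewrite mulr_suml big_mkcond /=.
rewrite exchange_big /=.
transitivity (\sum_(f : {ffun 'I_k -> option 'I_n})
   \prod_(i < k) ((match f i with None => a ord0 i | Some s => l i s end) *
                  (match f i with None => 1 | Some s => x ord0 s end))).
  apply: eq_bigr => f _; rewrite big_split /= -mono_eq.
  rewrite (bigD1 (Sf f)) //= [X in _ + X]big1 => [|S HS].
    by rewrite eqxx ffunE addr0.
  case: eqP => // E; case/eqP: HS; apply: val_inj; by rewrite /= -E.
rewrite -(bigA_distr_bigA (fun i (o : option 'I_n) => (match o with None => a ord0 i | Some s => l i s end) *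
                  (match o with None => 1 | Some s => x ord0 s end))).
by apply: eq_bigr => i _; rewrite sum_option mulr1.
Qed.
End Alg2.

End MB.
Import MB.

Module MC.
Import GRing.Theory.
Local Open Scope ring_scope.
Section Cnt.
Variables n k : nat.

Definition Yx (x : 'rV['F_2]_n) : {ffun Idx n k -> 'F_2} :=
  [ffun S : Idx n k => \prod_(s in val S) x ord0 s].

Lemma planted_sol (d : datum n k) x : ~~ in_flat d x -> Lform d.1 (alpha d.2) (Yx x) = 0.
Proof.
move=> Hd; rewrite /Yx Lform_eval.
have [i Hi] : exists i, (x *m d.1^T) ord0 i != d.2 ord0 i.
  apply/existsP; apply: contraR Hd => /existsPn H; rewrite /in_flat; apply/eqP/rowP => i.
  by apply/eqP; move/negPn: (H i).
rewrite (bigD1 i) //=; apply/eqP; rewrite mulf_eq0; apply/orP; left.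
move: Hi; rewrite !mxE.
have -> : \sum_j x ord0 j * d.1^T j i = \sum_s d.1 i s * x ord0 s.
  by apply: eq_bigr => s _; rewrite mxE mulrC.
case: (F2cases (\sum_s d.1 i s * x ord0 s)) => ->; case: (F2cases (d.2 ord0 i)) => -> //= _;
  by apply/eqP; apply: val_inj.
Qed.

Lemma planted_accept m x (d : {ffun 'I_m -> datum n k}) : d \in OmegaX n k m x -> psiL d.
Proof.
rewrite inE => /forallP Hd; apply/existsP; exists (Yx x); apply/andP; split.
  apply/forallP => S; apply/implyP => /eqP HS; rewrite /Yx ffunE HS big_set0 //.
apply/forallP => j; apply/eqP; apply: planted_sol.
by case/andP: (Hd j).
Qed.

Definition Rf := [set l : 'M['F_2]_(k, n) | row_free l].

Lemma card_pairs : #|[pred t : datum n k | row_free t.1]| = (#|Rf| * 2 ^ k)%N.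
Proof.
have -> : #|[pred t : datum n k | row_free t.1]| = #|setX Rf [set: 'rV['F_2]_k]|.
  by apply: eq_card => -[l e]; rewrite !inE andbT.
by rewrite cardsX cardsT card_mx card_Fp // mul1n.
Qed.

Lemma card_family m (p : pred (datum n k)) :
  #|[set d : {ffun 'I_m -> datum n k} | [forall j, p (d j)]]| = (#|p| ^ m)%N.
Proof.
rewrite -[m in RHS]card_ord -card_ffun_on; apply: eq_card => d.
by rewrite inE; apply/forallP/ffun_onP.
Qed.

Lemma card_Omega0 m : #|Omega0 n k m| = ((#|Rf| * 2 ^ k) ^ m)%N.
Proof. by rewrite -card_pairs -card_family. Qed.

Lemma card_G (Y : {ffun Idx n k -> 'F_2}) :
  (forall S : Idx n k, val S == set0 -> Y S = 1) ->
  (#|[pred t : datum n k | row_free t.1 && (Lform t.1 (alpha t.2) Y == 0%R)]|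
     <= #|Rf| * (2 ^ k - 1))%N.
Proof.
move=> HY.
have -> : #|[pred t : datum n k | row_free t.1 && (Lform t.1 (alpha t.2) Y == 0%R)]| =
   (\sum_(l : 'M['F_2]_(k, n)) \sum_(e : 'rV['F_2]_k) (if row_free l && (Lform l (alpha e) Y == 0%R) then 1 else 0))%N.
  rewrite -sum1_card big_mkcond /= pair_bigA /=.
  by apply: eq_bigr => -[l e] _; rewrite inE.
rewrite -sum_nat_const [X in (_ <= X)%N]big_mkcond /=; apply: leq_sum => l _.
rewrite inE; case: (row_free l) => /=; last by rewrite big1.
rewrite -big_mkcond sum1_card /=.
have [e0 He0] := exists_nz l HY.
have : [set e | Lform l (alpha e) Y == 0] \proper [set: 'rV['F_2]_k].
  rewrite properT; apply/negP => /eqP E.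
  by move: (in_setT e0); rewrite -E inE (negbTE He0).
move/proper_card; rewrite cardsT card_mx card_Fp // mul1n.
rewrite cardsE => H; rewrite -ltnS subn1 prednK ?expn_gt0 //; exact: H.
Qed.

End Cnt.

Section Cnt2.
Variables n k m : nat.

Definition goodb (Y : {ffun Idx n k -> 'F_2}) :=
  [forall S : Idx n k, (val S == set0) ==> (Y S == 1)].
Definition satb (Y : {ffun Idx n k -> 'F_2}) (d : {ffun 'I_m -> datum n k}) :=
  [forall j, (fun t : datum n k => row_free t.1 && (Lform t.1 (alpha t.2) Y == 0%R)) (d j)].

Lemma card_unif :
  (#|[set d in Omega0 n k m | psiL d]| <= 2 ^ #|{: Idx n k}| * (#|Rf n k| * (2 ^ k - 1)) ^ m)%N.
Proof.
rewrite -sum1_card.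
apply: (@leq_trans (\sum_d \sum_(Y : {ffun Idx n k -> 'F_2}) (goodb Y && satb Y d : nat))).
  rewrite [X in (_ <= X)%N](bigID (fun d => d \in [set d in Omega0 n k m | psiL d])) /=.
  apply: leq_trans (leq_addr _ _); apply: leq_sum => d.
  rewrite !inE => /andP [/forallP Hrf /existsP [Y /andP [HY /forallP HL]]].
  rewrite (bigD1 Y) //=; apply: leq_trans (leq_addr _ _).
  suff -> : goodb Y && satb Y d by [].
  apply/andP; split; first exact: HY.
  by apply/forallP => j; rewrite Hrf HL.
rewrite exchange_big /=.
have -> : (2 ^ #|{: Idx n k}| = #|{: {ffun Idx n k -> 'F_2}}|)%N by rewrite card_ffun card_Fp.
rewrite -sum_nat_const.
apply: leq_sum => Y _.
case HY: (goodb Y); last by rewrite big1.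
have -> : (\sum_d (true && satb Y d : nat) = #|[set d : {ffun 'I_m -> datum n k} | satb Y d]|)%N.
  by rewrite -sum1_card [RHS]big_mkcond; apply: eq_bigr => d _; rewrite inE; case: (satb Y d).
rewrite card_family.
have H := card_G (Y := Y) (fun S HS => eqP (implyP (forallP HY S) HS)).
case: m => [|m']; first by rewrite !expn0.
by rewrite leq_exp2r.
Qed.
End Cnt2.

Lemma card_Idx n k : (#|{: Idx n k}| <= n.+1 ^ k)%N.
Proof.
pose g (S : Idx n k) : {ffun 'I_k -> option 'I_n} :=
  [ffun i : 'I_k => nth None [seq Some s | s <- enum (val S)] i].
have Hg : forall S, setc (g S) = val S.
  move=> S; apply/setP => s; rewrite inE; apply/codomP/idP => [[i]|Hs].
    rewrite ffunE; case: (ltnP i (size [seq Some s | s <- enum (val S)])) => Hi.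
      move=> E; have : Some s \in [seq Some s | s <- enum (val S)] by rewrite E mem_nth.
      by rewrite mem_map ?mem_enum //; move=> ? ? [].
    by rewrite nth_default.
  have Hj : (index s (enum (val S)) < k)%N.
    apply: leq_trans (valP S); rewrite cardE index_mem mem_enum //.
  exists (Ordinal Hj); rewrite ffunE /= (nth_map s) ?nth_index ?mem_enum //.
  by rewrite index_mem mem_enum.
have inj_g : injective g.
  by move=> S1 S2 E; apply: val_inj; rewrite -Hg E Hg.
apply: leq_trans (@leq_card _ _ g inj_g) _; by rewrite card_ffun card_option !card_ord.
Qed.

Lemma unif_sub n k m : (#|[set d in Omega0 n k m | psiL d]| <= #|Omega0 n k m|)%N.
Proof. by apply: subset_leq_card; apply/subsetP => d; rewrite inE => /andP []. Qed.

End MC.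
Import MC.

Module MD.

Lemma nat_bound (n j : nat) : (1 <= n)%N ->
  (n.+1 ^ j.+1 <= n ^ j.+1 + 3 ^ j.+1 * n ^ j)%N.
Proof.
move=> Hn; elim: j => [|j IH]; first by rewrite !expn1 expn0 muln1; lia.
rewrite [n.+1 ^ _]expnS; apply: leq_trans (leq_mul (leqnn n.+1) IH) _.
rewrite [n ^ j.+2]expnS [3 ^ j.+2]expnS [n ^ j.+1]expnS.
have Hb : (1 <= 3 ^ j.+1)%N by rewrite expn_gt0.
move: (3 ^ j.+1) Hb (n ^ j.+1) => b Hb a.
nia.
Qed.

Local Open Scope R_scope.
Lemma INR_muln a b : INR (a * b)%N = (INR a * INR b).
Proof. exact: mult_INR. Qed.
Lemma INR_addn a b : INR (a + b)%N = (INR a + INR b).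
Proof. exact: plus_INR. Qed.
Lemma INR_expn a b : INR (a ^ b)%N = (INR a ^ b).
Proof. elim: b => [|b IH]; first by rewrite expn0. by rewrite expnS INR_muln IH. Qed.

Lemma ceil_ge x : (x <= INR (Z.to_nat (ceilR x))).
Proof.
rewrite /ceilR; have [H1 _] := base_Int_part (- x).
set z := Int_part (- x) in H1 *.
have Hc : (x <= IZR (- z)) by rewrite opp_IZR; lra.
case: (Z.le_gt_cases 0 (- z)) => Hz.
  by rewrite INR_IZR_INZ Z2Nat.id.
have : (IZR (- z) < 0) by apply: IZR_lt.
have := pos_INR (Z.to_nat (- z)); lra.
Qed.

End MD.
Import MD.

Module ME.
Local Open Scope R_scope.

Lemma INR_subn a b : (b <= a)%N -> INR (a - b)%N = INR a - INR b.
Proof. move=> H; apply: minus_INR; exact/leP. Qed.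

Lemma INR2 : INR 2 = 2. Proof. simpl; lra. Qed.

Lemma ratio_bound n k m :
  P_unif_accept n k m <= 2 ^ (n.+1 ^ k)%N * (1 - / 2 ^ k) ^ m.
Proof.
rewrite /P_unif_accept.
have HA := card_unif n k m.
have HB := card_Omega0 n k m.
have Hsub := unif_sub n k m.
have HI := card_Idx n k.
set A := #|[set d in Omega0 n k m | psiL d]| in HA Hsub *.
set B := #|Omega0 n k m| in HB Hsub *.
set P := #|Rf n k| in HA HB.
set I := #|{: Idx n k}| in HA HI.
have Hq : 0 <= 1 - / 2 ^ k.
  have : 1 <= 2 ^ k by apply: pow_R1_Rle; lra.
  move=> H; have : / 2 ^ k <= 1.
    rewrite -Rinv_1; apply: Rinv_le_contravar; lra.
  lra.
have Hpos : 0 <= 2 ^ (n.+1 ^ k)%N * (1 - / 2 ^ k) ^ m.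
  apply: Rmult_le_pos; [apply: pow_le; lra | exact: pow_le].
case: (B =P 0%N) => HB0.
  have -> : A = 0%N by move: Hsub; rewrite HB0; lia.
  by rewrite /Rdiv Rmult_0_l.
have H2k : (1 <= 2 ^ k)%N by rewrite expn_gt0.
have HAR : INR A <= 2 ^ I * (INR P * (2 ^ k - 1)) ^ m.
  move/leP: HA => /le_INR; rewrite INR_muln !INR_expn INR_muln INR_subn // INR_expn INR2.
  by [].
have HBR : INR B = INR P ^ m * (2 ^ k) ^ m.
  by rewrite HB INR_expn INR_muln INR_expn INR2 Rpow_mult_distr.
have HBn : INR B <> 0 by apply: not_0_INR; apply/eqP; apply/eqP.
have HPm : INR P ^ m <> 0 by move=> E; apply: HBn; rewrite HBR E Rmult_0_l.
have H2km : (2 ^ k) ^ m <> 0 by apply: pow_nonzero; apply: pow_nonzero; lra.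
have H2k0 : 2 ^ k <> 0 by apply: pow_nonzero; lra.
apply: Rle_trans (_ : 2 ^ I * (INR P * (2 ^ k - 1)) ^ m / INR B <= _).
  apply: Rmult_le_compat_r => //; apply: Rlt_le; apply: Rinv_0_lt_compat.
  by have := pos_INR B; lra.
have -> : 2 ^ I * (INR P * (2 ^ k - 1)) ^ m / INR B = 2 ^ I * (1 - / 2 ^ k) ^ m.
  rewrite HBR Rpow_mult_distr.
  have -> : (1 - / 2 ^ k) = (2 ^ k - 1) / 2 ^ k by field.
  rewrite Rpow_mult_distr pow_inv; field; split => //.
apply: Rmult_le_compat_r; first exact: pow_le.
apply: Rle_pow; first lra.
exact/leP.
Qed.

End ME.
Import ME.

Module MF.
Local Open Scope R_scope.

Lemma planted_zero n k m : P_planted_reject n k m = 0.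
Proof.
rewrite /P_planted_reject.
have H : forall x, #|[set d in OmegaX n k m x | ~~ psiL d]| = 0%N.
  move=> x; apply/eqP; rewrite cards_eq0; apply/eqP/setP => d; rewrite [RHS]inE.
  apply/negbTE/negP; rewrite inE => /andP [Hd]; by rewrite (planted_accept Hd).
rewrite (eq_bigr (fun _ => 0)); last by move=> x _; rewrite H /Rdiv Rmult_0_l.
have -> : \big[Rplus/0]_(x : 'rV['F_2]_n) 0 = 0.
  by elim/big_rec: _ => // x r _ ->; lra.
lra.
Qed.

Lemma ratio_ge0 n k m : 0 <= P_unif_accept n k m.
Proof.
rewrite /P_unif_accept /Rdiv.
case: (#|Omega0 n k m| =P 0%N) => [->|H]; first by rewrite Rinv_0 Rmult_0_r; lra.
apply: Rmult_le_pos; first exact: pos_INR.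
apply: Rlt_le; apply: Rinv_0_lt_compat; apply: lt_0_INR; apply/ltP; rewrite lt0n; exact/eqP.
Qed.

Lemma IZR_le_to_nat z : IZR z <= INR (Z.to_nat z).
Proof.
case: (Z.le_gt_cases 0 z) => Hz; first by rewrite INR_IZR_INZ Z2Nat.id //; apply: Rle_refl.
have : IZR z < 0 by apply: IZR_lt.
have := pos_INR (Z.to_nat z); lra.
Qed.

End MF.
Import MF.

Module MG.
Local Open Scope R_scope.

Lemma exp_le x y : x <= y -> exp x <= exp y.
Proof. case => [H|->]; [apply: Rlt_le; exact: exp_increasing | apply: Rle_refl]. Qed.

Lemma main_est (k' : nat) (Delta : R) (q := Rminus R1 (Rinv (pow (IZR (Zpos 2)) k'.+1))) :
  Rlt (Delta_k k'.+1) Delta -> forall M, 0 < M -> exists N0 : nat, forall n : nat, (N0 <= n)%N ->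
   2 ^ (n.+1 ^ k'.+1)%N * q ^ (m_of Delta k'.+1 n) <= exp (- M).
Proof.
move=> HD M HM.
have H2k : 2 <= 2 ^ k'.+1.
  rewrite /= ; have : 1 <= 2 ^ k' by apply: pow_R1_Rle; lra.
  lra.
have Hq0 : 0 < q.
  rewrite /q; have : / 2 ^ k'.+1 <= / 2 by apply: Rinv_le_contravar; lra.
  lra.
have Hq1 : q < 1.
  rewrite /q; have : 0 < / 2 ^ k'.+1 by apply: Rinv_0_lt_compat; lra.
  lra.
have HL : ln q < 0 by rewrite -ln_1; apply: ln_increasing.
have Ha : 0 < ln 2 by rewrite -ln_1; apply: ln_increasing; lra.
set L := ln q in HL *.
set a := ln 2 in Ha *.
have HDk : Delta_k k'.+1 * L = - a.
  rewrite /Delta_k ln_Rinv; last lra.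
  rewrite /L /q /a; field; fold q; fold L; lra.
have Hc : a + Delta * L < 0.
  have : (Delta - Delta_k k'.+1) * L < 0.
    have : 0 < (Delta - Delta_k k'.+1) * (- L) by apply: Rmult_lt_0_compat; lra.
    lra.
  lra.
set c := - (a + Delta * L).
have Hc' : 0 < c by rewrite /c; lra.
set K := 3 ^ k'.+1 * a.
set x0 := (K + M) / c.
exists (Z.to_nat (up x0)).+1 => n Hn.
have Hn1 : (1 <= n)%N by lia.
have Hnx : x0 < INR n.
  have [H1 _] := archimed x0.
  have := IZR_le_to_nat (up x0).
  have : INR (Z.to_nat (up x0)) <= INR n by apply: le_INR; apply/leP; lia.
  lra.
have HnK : K + M < INR n * c.
  have -> : K + M = x0 * c by rewrite /x0; field; lra.
  apply: Rmult_lt_compat_r => //.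
set m := m_of Delta k'.+1 n.
have Hm : Delta * INR (n ^ k'.+1)%N <= INR m by apply: ceil_ge.
set X := INR n ^ k'.
have HX : 1 <= X by apply: pow_R1_Rle; apply: (le_INR 1); apply/leP.
have Hnk : INR (n ^ k'.+1)%N = INR n * X by rewrite INR_expn.
have Hbound : INR (n.+1 ^ k'.+1)%N <= INR n * X + 3 ^ k'.+1 * X.
  have := le_INR _ _ (elimT leP (nat_bound k' Hn1)).
  rewrite INR_addn INR_muln !INR_expn.
  have -> : INR 3 = 3 by simpl; lra.
  by rewrite /X.
have Hexp : 2 ^ (n.+1 ^ k'.+1)%N * q ^ m = exp (INR (n.+1 ^ k'.+1)%N * a + INR m * L).
  rewrite exp_plus -!Rpower_pow //; lra.
rewrite Hexp; apply: exp_le; clear Hexp.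
rewrite Hnk in Hm.
have HE1 : INR (n.+1 ^ k'.+1)%N * a <= (INR n * X + 3 ^ k'.+1 * X) * a.
  apply: Rmult_le_compat_r; lra.
have HE2 : INR m * L <= Delta * (INR n * X) * L.
  have : 0 <= (INR m - Delta * (INR n * X)) * (- L) by apply: Rmult_le_pos; lra.
  lra.
have HE3 : (INR n * X + 3 ^ k'.+1 * X) * a + Delta * (INR n * X) * L = X * (K - INR n * c).
  rewrite /K /c; ring.
have HE4 : X * (K - INR n * c) <= - M.
  have : 0 <= (X - 1) * (INR n * c - K - M) by apply: Rmult_le_pos; lra.
  have : 0 <= M by lra.
  nra.
lra.
Qed.

End MG.
Import MG.


Local Open Scope R_scope.
Theorem mainTheorem8 (k : nat) (Delta : R) :
  (1 <= k)%N -> Rlt (Delta_k k) Delta ->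
  Un_cv (fun n : nat =>
           Rmax (P_unif_accept n k (m_of Delta k n))
                (P_planted_reject n k (m_of Delta k n))) R0.
Proof.
case: k => [//|k'] _ HD eps Heps.
have HM : (0 < Rabs (ln eps) + 1) by have := Rabs_pos (ln eps); lra.
have [N0 HN] := main_est HD HM.
exists N0 => n Hn.
rewrite /R_dist Rminus_0_r planted_zero Rmax_left; last exact: ratio_ge0.
rewrite Rabs_right; last by apply: Rle_ge; exact: ratio_ge0.
apply: Rle_lt_trans (ratio_bound _ _ _) _.
apply: Rle_lt_trans (HN n _) _; first by apply/leP.
rewrite -[X in (_ < X)](exp_ln eps) //; apply: exp_increasing.
have := Rle_abs (- ln eps); rewrite Rabs_Ropp; lra.
Qed.
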